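(* Let $\Lambda$ be an artin algebra, $n\ge 2$, and let $f=\{f^i\}_{i=1}^n\colon X\to Y$ be an irreducible morphism in $\mathbf{C_n}({\rm proj}\,\Lambda)$. If $f$ is not an epimorphism (in the category of complexes of $\Lambda$-modules) and ${\rm Im}\,f^i\in{\rm proj}\,\Lambda$ for all $1\le i\le n$, then $f$ is a monomorphism. Consequently, if $\Lambda=H$ is a hereditary artin algebra, every irreducible morphism in $\mathbf{C_n}({\rm proj}\,H)$ is either a monomorphism or an epimorphism.
   Context: For an artin algebra $\Lambda$ and $n\ge 2$, $\mathbf{C_n}({\rm proj}\,\Lambda)$ is the full subcategory of the category of complexes of finitely generated right $\Lambda$-modules consisting of complexes $X=(X^i,d^i_X)$ with $X^i$ projective for all $i$ and $X^i=0$ for $i\notin\{1,\dots,n\}$; morphisms are chain maps $f=\{f^i\}$. Kernels, cokernels, images, monomorphisms and epimorphisms are taken degreewise in the category $\mathbf{C_n}({\rm mod}\,\Lambda)$ of complexes of finitely generated modules concentrated in degrees $1,\dots,n$. A morphism $f$ in $\mathbf{C_n}({\rm proj}\,\Lambda)$ is irreducible if it is neither a section nor a retraction in $\mathbf{C_n}({\rm proj}\,\Lambda)$, and whenever $f=gh$ in $\mathbf{C_n}({\rm proj}\,\Lambda)$, $h$ is a section or $g$ is a retraction. *)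

(* Defs.v *)
(* Right Lambda-modules are left modules over the converse
   ring Lambda^c (lmodType (Lambda^c)). *)
From HB Require Import structures.
From mathcomp Require Import all_boot all_order all_algebra.
Set Implicit Arguments. Unset Strict Implicit. Unset Printing Implicit Defensive.
Import GRing.Theory.
Local Open Scope ring_scope.

Definition is_ideal (R : comNzRingType) (I : R -> Prop) : Prop :=
  I 0 /\ (forall x y, I x -> I y -> I (x + y)) /\ (forall r x, I x -> I (r * x)).

Definition artinian_ring (R : comNzRingType) : Prop :=
  forall I : nat -> R -> Prop,
    (forall k, is_ideal (I k)) ->
    (forall k x, I k.+1 x -> I k x) ->
    exists N, forall k, (N <= k)%N -> forall x, I k x <-> I N x.

Definition artin_algebra (L : nzRingType) : Prop :=
  exists (R : comNzRingType) (phi : {rmorphism R -> L}),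
    (forall r x, phi r * x = x * phi r) /\ artinian_ring R /\
    exists s : seq L, forall x : L, exists c : seq R,
      x = \sum_(i < size s) phi c`_i * s`_i.

Definition fin_gen (L : nzRingType) (M : lmodType L^c) : Prop :=
  exists s : seq M, forall m : M, exists c : seq L^c,
    m = \sum_(i < size s) c`_i *: s`_i.

(* projective object of mod Lambda: lifting property against epimorphisms
   between finitely generated modules *)
Definition projective (L : nzRingType) (M : lmodType L^c) : Prop :=
  forall (N N' : lmodType L^c), fin_gen N -> fin_gen N' ->
  forall g : {linear N -> N'}, (forall y, exists x, g x = y) ->
  forall h : {linear M -> N'}, exists k : {linear M -> N}, forall m, g (k m) = h m.

Definition in_proj (L : nzRingType) (M : lmodType L^c) : Prop :=
  fin_gen M /\ projective M.

Definition hereditary (L : nzRingType) : Prop :=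
  forall (M P : lmodType L^c), fin_gen M -> in_proj P ->
  forall j : {linear M -> P}, injective j -> projective M.

(* cochain complexes X^1 -> X^2 -> ... -> X^n with d^i : X^i -> X^{i+1},
   X^i = 0 for i outside {1..n}, every X^i in proj Lambda *)
Record cplx (L : nzRingType) (n : nat) := Cplx {
  obj : nat -> lmodType L^c;
  dif : forall i, {linear obj i -> obj i.+1};
  dif_dif : forall i (x : obj i), dif i.+1 (dif i x) = 0;
  obj_vanish : forall i, (i = 0%N \/ (n < i)%N) -> forall x : obj i, x = 0;
  obj_proj : forall i, (1 <= i <= n)%N -> in_proj (obj i)
}.

Record cmap (L : nzRingType) (n : nat) (X Y : cplx L n) := Cmap {
  cm : forall i, {linear obj X i -> obj Y i};
  cm_comm : forall i (x : obj X i), cm i.+1 (dif X i x) = dif Y i (cm i x)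
}.

Definition is_section (L : nzRingType) (n : nat) (X Y : cplx L n)
  (f : cmap X Y) : Prop :=
  exists g : cmap Y X, forall i (x : obj X i), cm g i (cm f i x) = x.

Definition is_retraction (L : nzRingType) (n : nat) (X Y : cplx L n)
  (f : cmap X Y) : Prop :=
  exists g : cmap Y X, forall i (y : obj Y i), cm f i (cm g i y) = y.

Definition irreducible (L : nzRingType) (n : nat) (X Y : cplx L n)
  (f : cmap X Y) : Prop :=
  ~ is_section f /\ ~ is_retraction f /\
  forall (Z : cplx L n) (h : cmap X Z) (g : cmap Z Y),
    (forall i (x : obj X i), cm f i x = cm g i (cm h i x)) ->
    is_section h \/ is_retraction g.

Definition cmono (L : nzRingType) (n : nat) (X Y : cplx L n) (f : cmap X Y) :=
  forall i, (1 <= i <= n)%N -> injective (cm f i).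

Definition cepi (L : nzRingType) (n : nat) (X Y : cplx L n) (f : cmap X Y) :=
  forall i, (1 <= i <= n)%N -> forall y : obj Y i, exists x, cm f i x = y.

(* Im f^i in proj Lambda: the image (given by an epi-mono factorization
   of f^i, which determines it up to isomorphism) lies in proj Lambda *)
Definition image_in_proj (L : nzRingType) (M N : lmodType L^c)
  (f : {linear M -> N}) : Prop :=
  exists (I : lmodType L^c) (p : {linear M -> I}) (j : {linear I -> N}),
    (forall y, exists x, p x = y) /\ injective j /\
    (forall x, j (p x) = f x) /\ in_proj I.

(* Main.v *)
Require Import Defs.
From Stdlib Require Import Classical.
From HB Require Import structures.
From mathcomp Require Import all_boot all_order all_algebra.
From Stdlib Require Import ClassicalEpsilon.
Set Implicit Arguments. Unset Strict Implicit. Unset Printing Implicit Defensive.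
Import GRing.Theory.
Local Open Scope ring_scope.

Section Lift.
Variables (R : pzRingType) (A B C : lmodType R) (j : {linear A -> B}) (g : C -> B).
Hypothesis glin : linear g.
Hypothesis jinj : injective j.
Hypothesis hex : forall c, exists a, j a = g c.
Definition liftf c := proj1_sig (constructive_indefinite_description _ (hex c)).
Lemma liftfK c : j (liftf c) = g c.
Proof. exact: (proj2_sig (constructive_indefinite_description _ (hex c))). Qed.
Fact liftf_lin : linear liftf.
Proof. by move=> a u v; apply: jinj; rewrite linearP !liftfK glin. Qed.
HB.instance Definition _ := GRing.isLinear.Build R C A *:%R liftf liftf_lin.
Definition liftL : {linear C -> A} := liftf.
Lemma liftLK c : j (liftL c) = g c. Proof. exact: liftfK. Qed.
End Lift.

Lemma lift_exists (R : pzRingType) (A B C : lmodType R) (j : {linear A -> B}) (g : C -> B) :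
  linear g -> injective j -> (forall c, exists a, j a = g c) ->
  exists h : {linear C -> A}, forall c, j (h c) = g c.
Proof. move=> gl ji hex; exists (liftL gl ji hex); exact: liftLK. Qed.

Section Img.
Variables (R : pzRingType) (M N : lmodType R) (f : {linear M -> N}).
Definition inimg (y : N) : bool :=
  if excluded_middle_informative (exists x, f x = y) then true else false.
Lemma inimgP y : reflect (exists x, f x = y) (inimg y).
Proof. rewrite /inimg; case: excluded_middle_informative => h; constructor => //. Qed.
Fact inimg_closed : subsemimod_closed inimg.
Proof.
split; first split.
- by apply/inimgP; exists 0; rewrite linear0.
- move=> u v /inimgP [x <-] /inimgP [y <-]; apply/inimgP; exists (x + y); by rewrite linearD.
- move=> a u /inimgP [x <-]; apply/inimgP; exists (a *: x); by rewrite linearZ.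
Qed.
HB.instance Definition _ := GRing.isSubmodClosed.Build R N inimg inimg_closed.
Definition Img := {y : N | inimg y}.
HB.instance Definition _ := Choice.on Img.
HB.instance Definition _ := SubType.on Img.
HB.instance Definition _ := [SubChoice_isSubLmodule of Img by <:].
Definition imp (x : M) : Img := exist _ (f x) (introT (inimgP _) (ex_intro _ x erefl)).
Fact imp_lin : linear imp.
Proof. by move=> a u v; apply: val_inj; rewrite /= linearP. Qed.
HB.instance Definition _ := GRing.isLinear.Build R M Img *:%R imp imp_lin.
Definition imj (y : Img) : N := val y.
Fact imj_lin : linear imj.
Proof. by []. Qed.
HB.instance Definition _ := GRing.isLinear.Build R Img N *:%R imj imj_lin.
Lemma imp_surj y : exists x, imp x = y.
Proof. case: y => y Hy; have /inimgP [x Hx] := Hy; exists x; apply: val_inj => //. Qed.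
Lemma imj_inj : injective imj. Proof. exact: val_inj. Qed.
Lemma impK x : imj (imp x) = f x. Proof. by []. Qed.
Definition impL : {linear M -> Img} := imp.
Definition imjL : {linear Img -> N} := imj.
End Img.
Lemma part1 (L : nzRingType) (n : nat) (X Y : cplx L n) (f : cmap X Y) :
  irreducible f -> ~ cepi f ->
  (forall i, (1 <= i <= n)%N -> image_in_proj (cm f i)) -> cmono f.
Proof.
move=> irr nepi himg.
pose spec i (I : lmodType L^c) (p : {linear obj X i -> I}) (j : {linear I -> obj Y i}) :=
  (forall y, exists x, p x = y) /\ injective j /\ (forall x, j (p x) = cm f i x) /\
  ((1 <= i <= n)%N -> in_proj I).
have hI : forall i, exists I p j, spec i I p j.
  move=> i; case: (boolP (1 <= i <= n)%N) => hi.
    have [I [p [j [h1 [h2 [h3 h4]]]]]] := himg i hi.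
    by exists I, p, j.
  exists (Img (cm f i)), (impL (cm f i)), (imjL (cm f i)).
  split; first exact: imp_surj.
  split; first exact: imj_inj.
  split; first by [].
  by move=> hi'; rewrite hi' in hi.
pose I i := proj1_sig (constructive_indefinite_description _ (hI i)).
have hp : forall i, exists p j, spec i (I i) p j.
  move=> i; exact: (proj2_sig (constructive_indefinite_description _ (hI i))).
pose p i := proj1_sig (constructive_indefinite_description _ (hp i)).
have hj : forall i, exists j, spec i (I i) (p i) j.
  move=> i; exact: (proj2_sig (constructive_indefinite_description _ (hp i))).
pose j i := proj1_sig (constructive_indefinite_description _ (hj i)).
have hs : forall i, spec i (I i) (p i) (j i).
  move=> i; exact: (proj2_sig (constructive_indefinite_description _ (hj i))).
have hd : forall i, exists h : {linear I i -> I i.+1},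
    forall y, j i.+1 (h y) = dif Y i (j i y).
  move=> i; apply: lift_exists.
  - by move=> a u v; rewrite !linearP.
  - by case: (hs i.+1) => _ [].
  - move=> y; case: (hs i) => [sur [_ [fac _]]].
    have [x <-] := sur y.
    exists (p i.+1 (dif X i x)).
    case: (hs i.+1) => [_ [_ [fac' _]]].
    by rewrite fac' cm_comm fac.
pose dI i := proj1_sig (constructive_indefinite_description _ (hd i)).
have dIK : forall i y, j i.+1 (dI i y) = dif Y i (j i y).
  move=> i; exact: (proj2_sig (constructive_indefinite_description _ (hd i))).
have jinj : forall i, injective (j i) by move=> i; case: (hs i) => _ [].
have dd : forall i (y : I i), dI i.+1 (dI i y) = 0.
  move=> i y; apply: (jinj i.+2); by rewrite dIK dIK dif_dif linear0.
have van : forall i, (i = 0%N \/ (n < i)%N) -> forall y : I i, y = 0.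
  move=> i hi y; case: (hs i) => [sur _]; have [x <-] := sur y.
  by rewrite (obj_vanish hi x) linear0.
have prj : forall i, (1 <= i <= n)%N -> in_proj (I i).
  by move=> i hi; case: (hs i) => _ [_ [_ ]]; apply.
pose Z : cplx L n := @Cplx L n I dI dd van prj.
have hcomm : forall i (x : obj X i), p i.+1 (dif X i x) = dI i (p i x).
  move=> i x; apply: (jinj i.+1); rewrite dIK.
  case: (hs i) => [_ [_ [fac _]]]; case: (hs i.+1) => [_ [_ [fac' _]]].
  by rewrite fac' fac cm_comm.
pose h : cmap X Z := @Cmap L n X Z p hcomm.
have gcomm : forall i (y : obj Z i), j i.+1 (dif Z i y) = dif Y i (j i y).
  exact: dIK.
pose g : cmap Z Y := @Cmap L n Z Y j gcomm.
case: irr => _ [_ H].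
case: (H Z h g).
- move=> i x /=; by case: (hs i) => [_ [_ [fac _]]].
- move=> [r hr] i _ x y /= e.
  case: (hs i) => [_ [_ [fac _]]].
  rewrite -!fac in e; have e' := jinj i _ _ e.
  by rewrite -(hr i x) -(hr i y) /= e'.
- move=> [r hr]; exfalso; apply: nepi => i _ y.
  case: (hs i) => [sur [_ [fac _]]].
  have [x hx] := sur (cm r i y).
  exists x; by rewrite -fac hx (hr i y).
Qed.

Lemma img_fin_gen (L : nzRingType) (M N : lmodType L^c) (f : {linear M -> N}) :
  fin_gen M -> fin_gen (Img f).
Proof.
move=> [s hs]; exists (map (impL f) s) => m.
have [x <-] := imp_surj m.
have [c ->] := hs x.
exists c; rewrite linear_sum size_map; apply: eq_bigr => i _.
by rewrite linearZ (nth_map 0).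
Qed.

Theorem proposition2p4 (L : nzRingType) (n : nat) :
  artin_algebra L -> (2 <= n)%N ->
  (forall (X Y : cplx L n) (f : cmap X Y),
     irreducible f -> ~ cepi f ->
     (forall i, (1 <= i <= n)%N -> image_in_proj (cm f i)) ->
     cmono f) /\
  (hereditary L ->
   forall (X Y : cplx L n) (f : cmap X Y),
     irreducible f -> cmono f \/ cepi f).
Proof.
move=> _ _; split; first exact: part1.
move=> her X Y f irr.
case: (classic (cepi f)) => he; first by right.
left; apply: part1 => // i hi.
exists (Img (cm f i)), (impL (cm f i)), (imjL (cm f i)).
split; first exact: imp_surj.
split; first exact: imj_inj.
split; first by [].
have fg : fin_gen (Img (cm f i)) by apply: img_fin_gen; case: (obj_proj X hi).
split => //.
exact: (her _ _ fg (obj_proj Y hi) (imjL (cm f i)) (@imj_inj _ _ _ (cm f i))).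
Qed.
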